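(* Let $n,m,n'$ be positive integers with $n\ge m$. Then $$\mu^*(n+n',m+1)\le \mu^*(n,m)+n'.$$
   Context: Let $\mathbb F_2=\{0,1\}$ be the field with two elements. For $u\in\mathbb F_2^n$, $|u|$ denotes the Hamming weight of $u$. A wiring on $n$ vertices is a matrix $W=(w_{i,j})\in M(n,n;\mathbb F_2)$ with $w_{i,i}=1$ for all $i$. The degree of vertex $j$ is the number of $1$s in the $j$th column of $W$. For $c\in\mathbb F_2^n$, $M(W,c)=\max\{|Wx+c| : x\in\mathbb F_2^n\}$. For $n\ge m\ge 1$, $A^*(n,m)$ is the set of wirings on $n$ vertices in which every vertex has degree exactly $m$, and $\mu^*(n,m)=\min\{M(W,0): W\in A^*(n,m)\}$. *)

(* Defs.v *)
From mathcomp Require Import all_boot all_order all_algebra.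
Set Implicit Arguments. Unset Strict Implicit. Unset Printing Implicit Defensive.
Import GRing.Theory.
Local Open Scope ring_scope.

Definition hweight (n : nat) (u : 'cV['F_2]_n) : nat :=
  #|[set i : 'I_n | u i ord0 != 0]|.

Definition is_wiring (n : nat) (W : 'M['F_2]_n) : bool :=
  [forall i : 'I_n, W i i == 1].

Definition vdeg (n : nat) (W : 'M['F_2]_n) (j : 'I_n) : nat :=
  #|[set i : 'I_n | W i j != 0]|.

Definition Mwc (n : nat) (W : 'M['F_2]_n) (c : 'cV['F_2]_n) : nat :=
  \max_(x : 'cV['F_2]_n) hweight (W *m x + c).

Definition Astar (n k : nat) : pred 'M['F_2]_n :=
  [pred W | is_wiring W && [forall j : 'I_n, (vdeg W j == k)%N]].

Arguments Astar : clear implicits.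

(* mu*(n,m) = min { M(W,0) : W in A*(n,m) }.
   The neutral element n is an upper bound of every M(W,0), so for
   nonempty A*(n,m) (the case n >= m >= 1) this is exactly the minimum. *)
Definition mu_star (n m : nat) : nat :=
  \big[minn/n]_(W : 'M['F_2]_n | W \in Astar n m) Mwc W 0.

(* Main.v *)
Require Import Defs.
From mathcomp Require Import all_boot all_order all_algebra.
Import GRing.Theory.
Local Open Scope ring_scope.

Lemma card_sum (T : finType) (P : pred T) : #|[set i | P i]| = (\sum_i P i)%N.
Proof. by rewrite cardsE -sum1_card big_mkcond /=; apply: eq_bigr => i _; rewrite unfold_in; case: (P i). Qed.

Lemma hweight_col (a b : nat) (u : 'cV['F_2]_a) (d : 'cV['F_2]_b) :
  hweight (col_mx u d) = (hweight u + hweight d)%N.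
Proof.
rewrite /hweight !card_sum big_split_ord /=.
by congr (_ + _)%N; apply: eq_bigr => i _; rewrite ?col_mxEu ?col_mxEd.
Qed.

Lemma hweight_le (a : nat) (u : 'cV['F_2]_a) : (hweight u <= a)%N.
Proof. by rewrite /hweight; apply: leq_trans (max_card _) _; rewrite card_ord. Qed.

Lemma vdeg_sum (a : nat) (W : 'M['F_2]_a) j : vdeg W j = (\sum_i (W i j != 0%R))%N.
Proof. exact: card_sum. Qed.

Lemma sum_delta (a : nat) (k0 : 'I_a) :
  (\sum_i (((i == k0)%:R : 'F_2) != 0%R) = 1)%N.
Proof.
rewrite (bigD1 k0) //= eqxx big1 //= => i /negbTE ->; by rewrite eqxx.
Qed.

Section Constr.
Variables (n n' m : nat) (j0 : 'I_n) (k0 : 'I_n') (W : 'M['F_2]_n).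
Definition Emx : 'M['F_2]_(n, n') := \matrix_(i, k) (i == j0)%:R.
Definition Cmx : 'M['F_2]_(n', n) := \matrix_(k, j) (k == k0)%:R.
Definition Wp : 'M['F_2]_(n + n') := block_mx W (W *m Emx) Cmx 1%:M.

Lemma Wp_M : (Mwc Wp 0 <= Mwc W 0 + n')%N.
Proof.
apply/bigmax_leqP => x _.
rewrite addr0 -[x]vsubmxK mul_block_col hweight_col.
apply: leq_add; last exact: hweight_le.
rewrite -mulmxA -mulmxDr -[W *m _]addr0.
exact: leq_bigmax.
Qed.

Lemma Wp_A : W \in Astar n m -> Wp \in Astar (n + n') m.+1.
Proof.
rewrite !inE => /andP[/forallP Hd /forallP Hv].
apply/andP; split.
  apply/forallP => i; rewrite /Wp.
  rewrite -[i]splitK; case: (split i) => k /=; rewrite ?block_mxEul ?block_mxEdr ?Hd //.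
  by rewrite mxE eqxx.
apply/forallP => j; rewrite vdeg_sum big_split_ord /=.
rewrite -[j]splitK; case: (split j) => k /=.
  under eq_bigr do rewrite block_mxEul.
  under [X in (_ + X)%N]eq_bigr do rewrite block_mxEdl mxE.
  by rewrite -vdeg_sum (eqP (Hv k)) sum_delta addn1.
under eq_bigr do rewrite block_mxEur.
under [X in (_ + X)%N]eq_bigr do rewrite block_mxEdr mxE.
rewrite (eq_bigr (fun i : 'I_n => nat_of_bool (W i j0 != 0%R))); last first.
  move=> i _; rewrite mxE (bigD1 j0) //= mxE eqxx mulr1 big1 ?addr0 //.
  by move=> l /negbTE hl; rewrite mxE hl mulr0.
rewrite -vdeg_sum (eqP (Hv j0)) (eq_bigr (fun i : 'I_n' => nat_of_bool (((i == k)%:R : 'F_2) != 0%R))).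
  by rewrite sum_delta addn1.
by move=> i _; rewrite eq_sym.
Qed.
End Constr.

Lemma bigmin_le (T : finType) (P : pred T) (F : T -> nat) a i :
  P i -> (\big[minn/a]_(j | P j) F j <= F i)%N.
Proof.
move=> Pi; rewrite unlock /=.
have : i \in index_enum T by rewrite mem_index_enum.
elim: (index_enum T) => //= x r IH; rewrite inE => /orP[/eqP <-|ir].
  by rewrite Pi geq_min leqnn.
by case: (P x); rewrite ?geq_min IH ?orbT.
Qed.

Theorem lemma5p2 (n m n' : nat) :
  (0 < n)%N -> (0 < m)%N -> (0 < n')%N -> (m <= n)%N ->
  (mu_star (n + n') m.+1 <= mu_star n m + n')%N.
Proof.
move=> Hn _ Hn' _.
pose j0 := Ordinal Hn; pose k0 := Ordinal Hn'.
rewrite /mu_star.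
apply: (big_ind (fun x => (\big[minn/(n + n')%N]_(W | W \in Astar (n + n') m.+1) Mwc W 0 <= x + n')%N)).
- elim/big_rec: _ => // i x _ h; by rewrite geq_min h orbT.
- by move=> a b ha hb; rewrite /minn; case: ifP.
move=> W HW.
have H1 := @Wp_A n n' m j0 k0 W HW.
have := @bigmin_le _ (fun W => W \in Astar (n + n') m.+1) (fun W => Mwc W 0) (n + n') _ H1.
move/leq_trans; apply; exact: Wp_M.
Qed.
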